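(* Fix real numbers $\alpha,\beta,\gamma,\delta$ with $\alpha\neq0$. Let $\mathscr T$ be a graph-enriched Schröder tree on a finite linear order $\ell$ with $|\ell|\ge2$, with root $r$ and $g=\bigvee\mathscr T$. Then, as an identity in $\mathbb C(x)$, $$\Phi_g(x)=\Big(\prod_{w\in\mathrm{Iv}(\mathscr T),\,w\ne r}\Gamma_{g_{\ell_w}}(x-\delta N_{rw})\,\det\big(U_\Gamma(a_w,g_w)(x-\delta N_{rw})\big)\Big)\det\big(U_\Gamma(a_r,g_r)(x)\big).$$
   Context: All graphs finite and simple. For a graph $g$ with $n$ vertices, the universal adjacency matrix is $U(g)=\alpha A(g)+\beta I_n+\gamma J_n+\delta D(g)$, where $A$ is the adjacency matrix, $D$ the diagonal degree matrix, $J_n$ the all-ones matrix. $\Phi_g(x)=\det(xI_n-U(g))$ and $\Gamma_g(x)=\mathbf 1^t(xI_n-U(g))^{-1}\mathbf 1\in\mathbb C(x)$, with $\mathbf 1$ the all-ones vector. Generalized composition: for a segmented partition $\pi=(\ell_1,\dots,\ell_k)$ of $\ell$ (nonempty consecutive segments whose concatenation is $\ell$), graphs $g_{\ell_j}$ on $\ell_j$ and a graph $h$ on $\pi$, $\bigvee_h(g_{\ell_1},\dots,g_{\ell_k})$ has vertex set $\ell$ and edges those of the $g_{\ell_j}$ plus all $\{x,y\}$, $x\in\ell_i,y\in\ell_j$, $\{\ell_i,\ell_j\}\in E(h)$. Graph-enriched Schröder tree on $\ell$: rooted plane tree with leaves the elements of $\ell$ left to right, each internal vertex having at least two children, with a graph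 $g_v$ on $\pi_v=(\ell_{v_1},\dots,\ell_{v_k})$ for each internal $v$ (children $v_1,\dots,v_k$ left to right, $\ell_u$ the leaves below $u$). $\bigvee$ of a leaf is the one-vertex graph and $\bigvee\mathscr T=\bigvee_{g_r}(\bigvee\mathscr T_{r_1},\dots,\bigvee\mathscr T_{r_k})$; $g_{\ell_u}=\bigvee\mathscr T_u$; $a_v=(g_{\ell_{v_1}},\dots,g_{\ell_{v_k}})$. For internal $v$ with $n_i=|\ell_{v_i}|$ and $N_i=\sum_{s:\{\ell_{v_s},\ell_{v_i}\}\in E(g_v)}n_s$: $D_\Gamma(a_v,g_v)(x)=\mathrm{diag}\big(1/\Gamma_{g_{\ell_{v_i}}}(x-\delta N_i)\big)_{i=1}^k$ and $U_\Gamma(a_v,g_v)(x)=-\alpha A(g_v)+\gamma I_k-\gamma J_k+D_\Gamma(a_v,g_v)(x)$ (with $A(g_v)$ indexed by $\pi_v$ in order). For non-root internal $w$ with parent $u$, $N_w=\sum_{x:\{\ell_x,\ell_w\}\in E(g_u)}|\ell_x|$, and $N_{rw}=N_{w_1}+\cdots+N_{w_m}$ along the path $r=w_0,w_1,\dots,w_m=w$. *)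

(* Defs.v *)
From HB Require Import structures.
From mathcomp Require Import all_boot all_order all_algebra.
Set Implicit Arguments. Unset Strict Implicit. Unset Printing Implicit Defensive.
Import Order.TTheory GRing.Theory Num.Theory.
Local Open Scope ring_scope.

(* A node carries a relation h on the indices 0..k-1 of its k children
   (the graph g_v on pi_v, whose i-th vertex is the segment l_{v_i}),
   and the list of its children, from left to right.                      *)
Inductive stree : Type :=
| SLeaf : stree
| SNode : (nat -> nat -> bool) -> seq stree -> stree.

Fixpoint nleaves (t : stree) : nat :=
  match t with
  | SLeaf => 1%N
  | SNode _ cs => sumn (map nleaves cs)
  end.

Fixpoint wf_stree (t : stree) : bool :=
  match t with
  | SLeaf => true
  | SNode h cs =>
      [&& (2 <= size cs)%N,
          [forall i : 'I_(size cs), forall j : 'I_(size cs),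
              (h i j == h j i) && ~~ h i i]
        & all wf_stree cs]
  end.

(* locate a vertex x in consecutive blocks of sizes s: (block index, offset) *)
Fixpoint locate (s : seq nat) (x : nat) : nat * nat :=
  match s with
  | [::] => (0%N, x)
  | s0 :: s' => if (x < s0)%N then (0%N, x)
                else let p := locate s' (x - s0) in (p.1.+1, p.2)
  end.

(* adjacency relation of the graph \bigvee t, on vertices 0..nleaves t - 1
   (generalized composition, recursively) *)
Fixpoint treeAdj (t : stree) : nat -> nat -> bool :=
  match t with
  | SLeaf => fun _ _ => false
  | SNode h cs =>
      let adjs := map treeAdj cs in
      let s := map nleaves cs in
      fun x y =>
        let px := locate s x in
        let py := locate s y in
        if px.1 == py.1 then nth (fun _ _ => false) adjs px.1 px.2 py.2
        else h px.1 py.1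
  end.

Fixpoint subtreeAt (t : stree) (p : seq nat) : stree :=
  match p, t with
  | [::], _ => t
  | i :: p', SNode _ cs => subtreeAt (nth SLeaf cs i) p'
  | _ :: _, SLeaf => SLeaf
  end.

(* paths of all internal vertices Iv(T) (the root is the empty path) *)
Fixpoint ipaths (t : stree) : seq (seq nat) :=
  match t with
  | SLeaf => [::]
  | SNode _ cs =>
      [::] :: flatten [seq map (cons ip.1) ip.2
                      | ip <- zip (iota 0 (size cs)) (map ipaths cs)]
  end.

Definition Nchild (h : nat -> nat -> bool) (cs : seq stree) (i : nat) : nat :=
  (\sum_(s < size cs | h s i) nleaves (nth SLeaf cs s))%N.

Fixpoint Npath (t : stree) (p : seq nat) : nat :=
  match p, t with
  | [::], _ => 0%N
  | i :: p', SNode h cs => (Nchild h cs i + Npath (nth SLeaf cs i) p')%N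
  | _ :: _, SLeaf => 0%N
  end.

Definition adjmx (R : realFieldType) (n : nat) (adj : nat -> nat -> bool) : 'M[R]_n :=
  \matrix_(i < n, j < n) (adj i j)%:R.

Definition degmx (R : realFieldType) (n : nat) (adj : nat -> nat -> bool) : 'M[R]_n :=
  diag_mx (\row_(i < n) (#|[pred j : 'I_n | adj i j]|)%:R).

Definition Umx (R : realFieldType) (alpha beta gamma delta : R)
    (n : nat) (adj : nat -> nat -> bool) : 'M[R]_n :=
  alpha *: adjmx R n adj + beta%:M + gamma *: const_mx 1 + delta *: degmx R n adj.

Definition Phi (R : realFieldType) (alpha beta gamma delta : R)
    (n : nat) (adj : nat -> nat -> bool) : {poly R} :=
  char_poly (Umx alpha beta gamma delta n adj).

Definition tof (R : realFieldType) (p : {poly R}) : {fraction {poly R}} :=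
  @FracField.tofrac _ p.
Definition cst (R : realFieldType) (a : R) : {fraction {poly R}} := tof a%:P.
Definition xF (R : realFieldType) : {fraction {poly R}} := tof 'X.

(* Gamma_g evaluated at z in R(x): 1^t (z I - U(g))^{-1} 1;
   Gamma_g(x - c) is GammaAt ... (xF - cst c) *)
Definition GammaAt (R : realFieldType) (alpha beta gamma delta : R)
    (n : nat) (adj : nat -> nat -> bool) (z : {fraction {poly R}}) : {fraction {poly R}} :=
  \sum_(i < n) \sum_(j < n)
     (invmx (z%:M - map_mx (@cst R) (Umx alpha beta gamma delta n adj))) i j.

Definition children (t : stree) : seq stree :=
  match t with SLeaf => [::] | SNode _ cs => cs end.

Definition UGam (R : realFieldType) (alpha beta gamma delta : R)
    (t : stree) (z : {fraction {poly R}}) : 'M[{fraction {poly R}}]_(size (children t)) :=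
  match t as t0 return 'M[{fraction {poly R}}]_(size (children t0)) with
  | SLeaf => 0
  | SNode h cs =>
      \matrix_(i < size cs, j < size cs)
        (cst (- alpha * (h i j)%:R + gamma * (i == j)%:R - gamma)
         + (i == j)%:R *
           (GammaAt alpha beta gamma delta (nleaves (nth SLeaf cs i)) (treeAdj (nth SLeaf cs i))
                    (z - cst (delta * (Nchild h cs i)%:R)))^-1)
  end.

(* Main.v *)
Require Import Defs.
From HB Require Import structures.
From mathcomp Require Import all_boot all_order all_algebra.
From mathcomp Require Import zify ring.
Set Implicit Arguments. Unset Strict Implicit. Unset Printing Implicit Defensive.
Import Order.TTheory GRing.Theory Num.Theory.
Local Open Scope ring_scope.

Lemma sylvester (F : comRingType) n k (X : 'M[F]_(n,k)) (Y : 'M[F]_(k,n)) :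
  \det (1%:M - X *m Y) = \det (1%:M - Y *m X).
Proof.
have E1 : block_mx (1%:M - X *m Y) X 0 1%:M *m block_mx 1%:M 0 Y 1%:M
          = block_mx 1%:M X Y 1%:M.
  by rewrite mulmx_block !mulmx1 !mul1mx !mul0mx !mulmx0 ?addr0 ?add0r subrK.
have E2 : block_mx 1%:M 0 Y 1%:M *m block_mx 1%:M X 0 (1%:M - Y *m X)
          = block_mx 1%:M X Y 1%:M.
  rewrite mulmx_block !mulmx1 !mul1mx !mul0mx ?mulmx0 ?addr0 ?add0r.
  by rewrite [Y *m X + _]addrC subrK.
have := congr1 determinant (etrans E1 (esym E2)).
by rewrite !det_mulmx !det_ublock !det_lblock !det1 !mulr1 !mul1r.
Qed.

Section Loc.
Variables (T : Type) (x0 : T) (sz : T -> nat).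

Lemma sum_locate (R : Type) (idx : R) (op : Monoid.com_law idx) (l : seq T)
   (f : nat -> nat -> R) :
 \big[op/idx]_(y < sumn (map sz l)) f (locate (map sz l) y).1 (locate (map sz l) y).2
 = \big[op/idx]_(i < size l) \big[op/idx]_(a < sz (nth x0 l i)) f i a.
Proof.
elim: l f => [|t l IH] f /=; first by rewrite !big_ord0.
rewrite big_split_ord big_ord_recl /=.
congr (op _ _).
  by apply: eq_bigr => i _ /=; rewrite ltn_ord.
rewrite -(IH (fun i a => f i.+1 a)).
apply: eq_bigr => i _ /=.
have -> : (sz t + i < sz t)%N = false by rewrite ltnNge leq_addr.
by rewrite addKn.
Qed.

Lemma locate_valid (l : seq T) x : (x < sumn (map sz l))%N ->
  ((locate (map sz l) x).1 < size l)%N &&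
  ((locate (map sz l) x).2 < sz (nth x0 l (locate (map sz l) x).1))%N.
Proof.
elim: l x => [|t l IH] x //=.
case: ifP => hx /=; first by rewrite hx.
move=> hlt; have /IH : (x - sz t < sumn (map sz l))%N by lia.
by [].
Qed.

End Loc.

Lemma locate_inj (s : seq nat) x y : (x < sumn s)%N -> (y < sumn s)%N ->
  locate s x = locate s y -> x = y.
Proof.
elim: s x y => [|s0 s IH] x y //= hx hy.
case: ifP => hx0; case: ifP => hy0 /=.
- by case.
- by case.
- by case.
case=> h1 h2.
have : (x - s0 = y - s0)%N.
  apply: IH; [lia | lia | ].
  by rewrite [locate s (x - s0)]surjective_pairing [locate s (y - s0)]surjective_pairing h1 h2.
lia.
Qed.

Definition blkmx (F : ringType) (T : Type) (sz : T -> nat) (l : seq T)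
   (Mf : nat -> nat -> nat -> F) : 'M[F]_(sumn (map sz l)) :=
  \matrix_(x, y) (if (locate (map sz l) x).1 == (locate (map sz l) y).1
                  then Mf (locate (map sz l) x).1 (locate (map sz l) x).2
                          (locate (map sz l) y).2 else 0).

Lemma det_blkmx (F : comRingType) (T : Type) (x0 : T) (sz : T -> nat) (l : seq T)
   (Mf : nat -> nat -> nat -> F) :
  \det (blkmx sz l Mf) = \prod_(i < size l) \det (\matrix_(a, b < sz (nth x0 l i)) Mf i a b).
Proof.
elim: l Mf => [|t l IH] Mf; first by rewrite det_mx00 big_ord0.
have -> : blkmx sz (t :: l) Mf =
   block_mx (\matrix_(a, b < sz t) Mf 0%N a b) 0 0 (blkmx sz l (fun i => Mf i.+1)).
  apply/matrixP => x y.
  rewrite -(splitK x) -(splitK y).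
  case: (split x) => x'; case: (split y) => y' /=.
  - by rewrite block_mxEul !mxE /= !ltn_ord.
  - rewrite block_mxEur !mxE /= ltn_ord.
    by have -> : (sz t + y' < sz t)%N = false by rewrite ltnNge leq_addr.
  - rewrite block_mxEdl !mxE /= ltn_ord.
    by have -> : (sz t + x' < sz t)%N = false by rewrite ltnNge leq_addr.
  - rewrite block_mxEdr !mxE /=.
    have -> : (sz t + x' < sz t)%N = false by rewrite ltnNge leq_addr.
    have -> : (sz t + y' < sz t)%N = false by rewrite ltnNge leq_addr.
    by rewrite !addKn eqSS.
by rewrite det_ublock IH big_ord_recl /=.
Qed.

Section GC.
Variables (F : fieldType) (T : Type) (x0 : T) (sz : T -> nat) (l : seq T)
  (Mf : nat -> nat -> nat -> F) (Cf : nat -> nat -> F).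
Local Notation n := (sumn (map sz l)).
Local Notation k := (size l).
Local Notation loc := (locate (map sz l)).

Definition Mi (i : nat) : 'M[F]_(sz (nth x0 l i)) := \matrix_(a, b) Mf i a b.
Definition Gam (i : nat) : F := \sum_a \sum_b invmx (Mi i) a b.
Definition rf (i a : nat) : F :=
  \sum_(a' < sz (nth x0 l i) | a' == a :> nat) \sum_b invmx (Mi i) a' b.
Definition Pmx : 'M[F]_(n, k) := \matrix_(x, i) ((loc x).1 == i)%:R.
Definition Xmx : 'M[F]_(n, k) := \matrix_(x, i) (((loc x).1 == i)%:R * rf i (loc x).2).
Definition Cm : 'M[F]_k := \matrix_(i, j) Cf i j.

Hypothesis Munit : forall i : 'I_k, Mi i \in unitmx.
Hypothesis Gnz : forall i : 'I_k, Gam i != 0.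

Lemma rfE (i : nat) (a : 'I_(sz (nth x0 l i))) : rf i a = \sum_b invmx (Mi i) a b.
Proof.
by rewrite /rf (eq_bigl (fun a' => a' == a)) ?big_pred1_eq.
Qed.

Lemma BX : blkmx sz l Mf *m Xmx = Pmx.
Proof.
apply/matrixP => x i; rewrite !mxE.
under eq_bigr => y _ do rewrite !mxE.
rewrite (sum_locate x0 sz _ l
   (fun j a => (if (loc x).1 == j then Mf (loc x).1 (loc x).2 a else 0) *
               ((j == i)%:R * rf i a))).
have /andP [hb ho] := locate_valid x0 (ltn_ord x).
rewrite (bigD1 (Ordinal hb)) //=. rewrite [X in _ + X]big1 ?addr0; last first.
  move=> j hj; rewrite big1 // => a _.
  have -> : ((loc x).1 == j) = false.
    by apply/negbTE; move: hj; apply: contra => /eqP h; apply/eqP/val_inj.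
  by rewrite mul0r.
rewrite eqxx.
have [hi|hi] := eqVneq (loc x).1 (i : nat); last first.
  by rewrite big1 // => a _; rewrite mul0r mulr0.
rewrite -hi.
under eq_bigr => a _ do rewrite mul1r.
set o := Ordinal ho.
have -> : (loc x).2 = o by [].
have hU := mulmxV (Munit (Ordinal hb)).
transitivity (\sum_b (Mi (Ordinal hb) *m invmx (Mi (Ordinal hb))) o b).
  under [RHS]eq_bigr => b _ do rewrite mxE.
  rewrite exchange_big /=.
  apply: eq_bigr => a _.
  by rewrite rfE mulr_sumr /Mi mxE.
rewrite hU (bigD1 o) //= big1 ?addr0; first by rewrite mxE eqxx.
by move=> b hb'; rewrite mxE eq_sym (negbTE hb').
Qed.


Lemma PtX : Pmx^T *m Xmx = diag_mx (\row_(i < k) Gam i).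
Proof.
apply/matrixP => i j; rewrite !mxE.
under eq_bigr => x _ do rewrite !mxE.
rewrite (sum_locate x0 sz _ l (fun j' a => (j' == i)%:R * ((j' == j)%:R * rf j a))).
rewrite (bigD1 i) //= [X in _ + X]big1 ?addr0; last first.
  move=> j' hj'; rewrite big1 // => a _.
  have -> : (nat_of_ord j' == nat_of_ord i) = false by apply/negbTE.
  by rewrite mul0r.
rewrite eqxx.
have [<-|hij] := eqVneq i j.
  rewrite eqxx mulr1n /Gam; apply: eq_bigr => a _.
  by rewrite !mul1r rfE.
have hn : (nat_of_ord i == nat_of_ord j) = false by apply/negbTE.
by rewrite hn ?(negbTE hij) mulr0n big1 // => a _; rewrite mul0r mulr0.
Qed.

Lemma Adecomp : (\matrix_(x, y < n) ((if (loc x).1 == (loc y).1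
      then Mf (loc x).1 (loc x).2 (loc y).2 else 0) - Cf (loc x).1 (loc y).1))
  = blkmx sz l Mf - Pmx *m Cm *m Pmx^T.
Proof.
apply/matrixP => x y; rewrite /blkmx !mxE; congr (_ - _).
have /andP [hbx _] := locate_valid x0 (ltn_ord x).
have /andP [hby _] := locate_valid x0 (ltn_ord y).
under eq_bigr => i _ do rewrite !mxE.
rewrite (bigD1 (Ordinal hby)) //= [X in _ + X]big1 ?addr0; last first.
  move=> i hi.
  have -> : ((loc y).1 == nat_of_ord i) = false.
    by apply/negbTE; move: hi; apply: contra => /eqP h; apply/eqP/val_inj.
  by rewrite mulr0.
rewrite eqxx mulr1.
under eq_bigr => i _ do rewrite !mxE.
rewrite (bigD1 (Ordinal hbx)) //= [X in _ + X]big1 ?addr0; last first.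
  move=> i hi.
  have -> : ((loc x).1 == nat_of_ord i) = false.
    by apply/negbTE; move: hi; apply: contra => /eqP h; apply/eqP/val_inj.
  by rewrite mul0r.
by rewrite eqxx mul1r.
Qed.

Theorem gencomp :
  \det (\matrix_(x, y < n) ((if (loc x).1 == (loc y).1
      then Mf (loc x).1 (loc x).2 (loc y).2 else 0) - Cf (loc x).1 (loc y).1))
  = (\prod_(i < k) (\det (Mi i) * Gam i)) *
    \det (\matrix_(i, j < k) ((i == j)%:R * (Gam i)^-1 - Cf i j)).
Proof.
rewrite Adecomp -{1}BX -!mulmxA -{1}(mulmx1 (blkmx sz l Mf)) -mulmxBr det_mulmx.
rewrite sylvester -mulmxA PtX.
have HD : \matrix_(i, j < k) ((i == j)%:R * (Gam i)^-1 - Cf i j) *m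
            diag_mx (\row_(i < k) Gam i) = 1%:M - Cm *m diag_mx (\row_(i < k) Gam i).
  apply/matrixP => i j; rewrite !mul_mx_diag !mxE.
  have [<-|hij] := eqVneq i j.
    by rewrite !mulr1n mulrBl mul1r mulVf.
  by rewrite !mulr0n mul0r !sub0r mulNr.
rewrite -HD det_mulmx det_diag (det_blkmx x0).
under [X in _ * (_ * X)]eq_bigr => i _ do rewrite mxE.
rewrite big_split /=.
have -> : \prod_(i < k) \det (\matrix_(a, b < sz (nth x0 l i)) Mf i a b) =
          \prod_(i < k) \det (Mi i) by [].
by rewrite [X in _ * X]mulrC mulrA.
Qed.

End GC.

Section Tree.
Variables (R : realFieldType) (alpha beta gamma delta : R).
Local Notation FF := {fraction {poly R}}.

Definition uE (n : nat) (adj : nat -> nat -> bool) (a b : nat) : R :=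
  alpha * (adj a b)%:R + (a == b)%:R * (beta + delta * (#|[pred j : 'I_n | adj a j]|)%:R) + gamma.

Lemma UmxE n adj : Umx alpha beta gamma delta n adj = \matrix_(a, b) uE n adj a b.
Proof.
apply/matrixP => a b; rewrite !mxE /uE.
have [<-|hab] := eqVneq a b.
  by rewrite eqxx !mulr1n mul1r mulr1; ring.
have hn : (nat_of_ord a == nat_of_ord b) = false by apply/negbTE.
by rewrite hn !mulr0n mul0r mulr0 mulr1 !addr0.
Qed.

Definition Mz n adj (z : FF) : 'M[FF]_n := z%:M - map_mx (@cst R) (Umx alpha beta gamma delta n adj).

Lemma MzE n adj z : Mz n adj z = \matrix_(a, b) (z *+ (a == b) - cst (uE n adj a b)).
Proof. by apply/matrixP => a b; rewrite /Mz UmxE !mxE. Qed.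

Lemma cstD (a b : R) : cst (a + b) = cst a + cst b.
Proof. by rewrite /cst /tof polyCD rmorphD. Qed.
Lemma cstM (a b : R) : cst (a * b) = cst a * cst b.
Proof. by rewrite /cst /tof polyCM rmorphM. Qed.
Lemma cstN (a : R) : cst (- a) = - cst a.
Proof. by rewrite /cst /tof polyCN rmorphN. Qed.
Lemma cst0 : cst (0 : R) = 0.
Proof. by rewrite /cst /tof rmorph0. Qed.
Lemma cst1 : cst (1 : R) = 1.
Proof. by rewrite /cst /tof rmorph1. Qed.

Lemma Mz_char n adj (c : R) :
  Mz n adj (xF R - cst c) =
  map_mx (@FracField.tofrac _) (char_poly_mx (Umx alpha beta gamma delta n adj + c%:M)).
Proof.
apply/matrixP => a b; rewrite /Mz !mxE /cst /tof /xF.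
have [<-|hab] := eqVneq a b.
  by rewrite !mulr1n rmorphB rmorphD /= polyCD rmorphD /=; ring.
by rewrite !mulr0n !addr0 !sub0r rmorphN.
Qed.

Lemma Mz_det n adj (c : R) : \det (Mz n adj (xF R - cst c)) != 0.
Proof.
rewrite Mz_char det_map_mx tofrac_eq0.
exact: monic_neq0 (char_poly_monic _).
Qed.

Lemma Mz_unit n adj (c : R) : Mz n adj (xF R - cst c) \in unitmx.
Proof. by rewrite unitmxE unitfE Mz_det. Qed.


Lemma Gam_nz n adj (c : R) : (0 < n)%N ->
  GammaAt alpha beta gamma delta n adj (xF R - cst c) != 0.
Proof.
move=> n0.
rewrite /GammaAt -/(Mz n adj _).
set M := Mz n adj _.
set U := Umx alpha beta gamma delta n adj.
pose u : 'M[FF]_(n,1) := const_mx 1.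
pose v : 'M[FF]_(1,n) := const_mx 1.
have E : M - u *m v = map_mx (@FracField.tofrac _) (char_poly_mx (U + c%:M + const_mx 1)).
  rewrite /M Mz_char; apply/matrixP => a b; rewrite !mxE big_ord1 !mxE.
  by rewrite !rmorphB /= !polyCD !rmorphD /= mulr1; ring.
have D1 : \det (M - u *m v) = \det M * (1 - \sum_i \sum_j invmx M i j).
  have -> : M - u *m v = M *m (1%:M - invmx M *m u *m v).
    by rewrite mulmxBr mulmx1 !mulmxA mulmxV ?mul1mx // /M Mz_unit.
  rewrite det_mulmx sylvester det_mx11 !mxE; congr (_ * (_ - _)).
  apply: eq_bigr => a _; rewrite !mxE mul1r.
  by apply: eq_bigr => b _; rewrite !mxE mulr1.
apply/negP => /eqP G0.
move: D1; rewrite G0 subr0 mulr1 E /M Mz_char !det_map_mx => /eqP.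
rewrite tofrac_eq => /eqP Hc.
have := congr1 (fun p : {poly R} => p`_n.-1) Hc.
rewrite /= !char_poly_trace // mxtraceD => /eqP.
rewrite eqr_opp -subr_eq0 addrC addKr.
have -> : \tr (const_mx 1 : 'M[R]_n) = n%:R.
  by rewrite /mxtrace (eq_bigr (fun _ => 1)) ?sumr_const ?card_ord // => i _; rewrite mxE.
by rewrite pnatr_eq0 => /eqP n00; rewrite n00 in n0.
Qed.

End Tree.

Fixpoint stree_ind2 (P : stree -> Prop) (HL : P SLeaf)
  (HN : forall h cs, (forall i, (i < size cs)%N -> P (nth SLeaf cs i)) -> P (SNode h cs))
  (t : stree) {struct t} : P t :=
  match t with
  | SLeaf => HL
  | SNode h cs => HN h cs
      ((fix F (l : seq stree) : forall i, (i < size l)%N -> P (nth SLeaf l i) :=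
        match l with
        | [::] => fun i hi => False_ind _ (Bool.diff_false_true hi)
        | c :: l' => fun i => match i with
                             | 0 => fun _ => stree_ind2 HL HN c
                             | i'.+1 => fun hi => F l' i' hi
                             end
        end) cs)
  end.

Lemma wf_child h cs i : wf_stree (SNode h cs) -> (i < size cs)%N -> wf_stree (nth SLeaf cs i).
Proof. by move=> /and3P [_ _ /all_nthP H] hi; apply: H. Qed.

Lemma wf_hsym h cs i j : wf_stree (SNode h cs) -> (i < size cs)%N -> (j < size cs)%N ->
  h i j = h j i /\ h i i = false.
Proof.
move=> /and3P [_ /forallP H _] hi hj.
move: (H (Ordinal hi)) => /forallP /(_ (Ordinal hj)) /andP [/eqP e /negbTE n].
by [].
Qed.

Lemma nleaves_gt0 t : wf_stree t -> (0 < nleaves t)%N.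
Proof.
elim/stree_ind2: t => [//|h cs IH] wf /=.
have /and3P [h2 _ _] := wf.
have c0 : (0 < size cs)%N by lia.
move: (IH 0%N c0 (wf_child wf c0)).
case: cs {IH wf h2} c0 => [//|c cs] _ /=; lia.
Qed.

Lemma nth_treeAdj cs i : nth (fun _ _ => false) (map treeAdj cs) i = treeAdj (nth SLeaf cs i).
Proof. by elim: cs i => [|c cs IH] [|i] //=. Qed.

Lemma card_sumb m (P : nat -> bool) : #|[pred j : 'I_m | P j]| = (\sum_(j < m) P j)%N.
Proof.
rewrite -sum1_card big_mkcond /=; apply: eq_bigr => j _.
by rewrite inE; case: (P j).
Qed.

Lemma loc_eq (s : seq nat) (x y : nat) : (x < sumn s)%N -> (y < sumn s)%N ->
  (x == y) = ((locate s x).1 == (locate s y).1) && ((locate s x).2 == (locate s y).2).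
Proof.
move=> hx hy; apply/eqP/andP => [-> //| [/eqP h1 /eqP h2]].
apply: (locate_inj hx hy).
by rewrite (surjective_pairing (locate s x)) (surjective_pairing (locate s y)) h1 h2.
Qed.

Lemma deg_node h cs (x : nat) : wf_stree (SNode h cs) -> (x < nleaves (SNode h cs))%N ->
  #|[pred j : 'I_(nleaves (SNode h cs)) | treeAdj (SNode h cs) x j]| =
  (#|[pred j : 'I_(nleaves (nth SLeaf cs (locate (map nleaves cs) x).1)) |
      treeAdj (nth SLeaf cs (locate (map nleaves cs) x).1) (locate (map nleaves cs) x).2 j]|
   + Nchild h cs (locate (map nleaves cs) x).1)%N.
Proof.
move=> wf hx.
have hx' : (x < sumn (map nleaves cs))%N := hx.
have /andP [hb ho] := locate_valid SLeaf hx'.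
set bx := (locate _ x).1 in hb ho *. set ox := (locate _ x).2 in ho *.
rewrite !card_sumb.
pose f := fun j' a => nat_of_bool (if bx == j' then treeAdj (nth SLeaf cs bx) ox a else h bx j').
have E : forall j : 'I_(nleaves (SNode h cs)), (treeAdj (SNode h cs) x j : nat) =
    f (locate (map nleaves cs) j).1 (locate (map nleaves cs) j).2.
  by move=> j; rewrite /f /= nth_treeAdj.
rewrite (eq_bigr _ (fun j _ => E j)) (sum_locate SLeaf nleaves _ cs f).
rewrite (bigD1 (Ordinal hb)) //= {1}/f eqxx; congr (_ + _)%N.
rewrite /Nchild [RHS]big_mkcond /= [RHS](bigD1 (Ordinal hb)) //=.
have [_ lp] := wf_hsym wf hb hb.
rewrite lp add0n; apply: eq_bigr => j hj.
have hjn : (bx == j) = false.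
  by apply/negbTE; move: hj; apply: contra => /eqP e; apply/eqP/val_inj.
rewrite /f hjn big_const_ord iter_addn_0.
have [sy _] := wf_hsym wf hb (ltn_ord j).
by rewrite sy; case: (h j bx); rewrite ?mul1n ?mul0n.
Qed.

Section Node.
Variables (R : realFieldType) (alpha beta gamma delta : R).
Local Notation FF := {fraction {poly R}}.
Local Notation loc cs := (locate (map nleaves cs)).

Definition Mfn h cs (z : FF) (i a b : nat) : FF :=
  (z - cst (delta * (Nchild h cs i)%:R)) *+ (a == b)
  - cst (uE alpha beta gamma delta (nleaves (nth SLeaf cs i)) (treeAdj (nth SLeaf cs i)) a b).
Definition Cfn (h : nat -> nat -> bool) (i j : nat) : FF :=
  cst (alpha * (h i j)%:R + gamma - gamma * (i == j)%:R).

Lemma node_mx h cs z : wf_stree (SNode h cs) ->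
  Mz alpha beta gamma delta (nleaves (SNode h cs)) (treeAdj (SNode h cs)) z =
  \matrix_(x, y < sumn (map nleaves cs))
    ((if (loc cs x).1 == (loc cs y).1 then Mfn h cs z (loc cs x).1 (loc cs x).2 (loc cs y).2
      else 0) - Cfn h (loc cs x).1 (loc cs y).1).
Proof.
move=> wf; rewrite MzE; apply/matrixP => x y; rewrite !mxE.
have hx : (x < sumn (map nleaves cs))%N := ltn_ord x.
have hy : (y < sumn (map nleaves cs))%N := ltn_ord y.
have /andP [hbx hox] := locate_valid SLeaf hx.
have -> : (x == y) = (nat_of_ord x == nat_of_ord y) by [].
rewrite (loc_eq hx hy) /uE (deg_node wf hx).
have -> : treeAdj (SNode h cs) x y =
   (if (loc cs x).1 == (loc cs y).1
    then treeAdj (nth SLeaf cs (loc cs x).1) (loc cs x).2 (loc cs y).2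
    else h (loc cs x).1 (loc cs y).1) by rewrite /= nth_treeAdj.
rewrite /Mfn /Cfn /uE; have -> : (nat_of_ord x == nat_of_ord y) = ((loc cs x).1 == (loc cs y).1) && ((loc cs x).2 == (loc cs y).2) by apply: loc_eq.
have [e1|ne] := eqVneq (loc cs x).1 (loc cs y).1.
  have [_ lp] := wf_hsym wf hbx hbx.
  rewrite -e1 lp /= ?eqxx /= natrD.
  case: ((loc cs x).2 == (loc cs y).2); rewrite /= ?mulr1n ?mulr0n ?mul1r ?mul0r;
    rewrite !(cstD, cstM, cstN, cst0, cst1); ring.
rewrite /= ?mulr0n ?mul0r; rewrite !(cstD, cstM, cstN, cst0, cst1); ring.
Qed.


Lemma node_det h cs (c : R) : wf_stree (SNode h cs) ->
  \det (Mz alpha beta gamma delta (nleaves (SNode h cs)) (treeAdj (SNode h cs)) (xF R - cst c)) =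
  (\prod_(i < size cs)
     (\det (Mz alpha beta gamma delta (nleaves (nth SLeaf cs i)) (treeAdj (nth SLeaf cs i))
               (xF R - cst (c + delta * (Nchild h cs i)%:R)))
      * GammaAt alpha beta gamma delta (nleaves (nth SLeaf cs i)) (treeAdj (nth SLeaf cs i))
               (xF R - cst (c + delta * (Nchild h cs i)%:R))))
  * \det (UGam alpha beta gamma delta (SNode h cs) (xF R - cst c)).
Proof.
move=> wf.
set z := xF R - cst c.
have zE : forall i : nat, z - cst (delta * (Nchild h cs i)%:R) =
                    xF R - cst (c + delta * (Nchild h cs i)%:R).
  by move=> i; rewrite cstD opprD addrA.
have HMi : forall i : nat, Mi SLeaf nleaves cs (Mfn h cs z) i =
   Mz alpha beta gamma delta (nleaves (nth SLeaf cs i)) (treeAdj (nth SLeaf cs i))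
      (xF R - cst (c + delta * (Nchild h cs i)%:R)).
  by move=> i; rewrite MzE -zE; apply/matrixP => a b; rewrite !mxE /Mfn.
have HG : forall i : nat, Gam SLeaf nleaves cs (Mfn h cs z) i =
   GammaAt alpha beta gamma delta (nleaves (nth SLeaf cs i)) (treeAdj (nth SLeaf cs i))
      (xF R - cst (c + delta * (Nchild h cs i)%:R)).
  by move=> i; rewrite /Gam HMi.
have Hu : forall i : 'I_(size cs), Mi SLeaf nleaves cs (Mfn h cs z) i \in unitmx.
  by move=> i; rewrite HMi Mz_unit.
have Hg : forall i : 'I_(size cs), Gam SLeaf nleaves cs (Mfn h cs z) i != 0.
  move=> i; rewrite HG; apply: Gam_nz; apply: nleaves_gt0.
  exact: wf_child wf (ltn_ord i).
Opaque Gam GammaAt Mi Mz.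
have := gencomp (Cfn h) Hu Hg.
move=> Hgc.
have P1 : \prod_(i < size cs)
     (\det (Mi SLeaf nleaves cs (Mfn h cs z) i) * Gam SLeaf nleaves cs (Mfn h cs z) i) =
  \prod_(i < size cs)
     (\det (Mz alpha beta gamma delta (nleaves (nth SLeaf cs i)) (treeAdj (nth SLeaf cs i))
               (xF R - cst (c + delta * (Nchild h cs i)%:R)))
      * GammaAt alpha beta gamma delta (nleaves (nth SLeaf cs i)) (treeAdj (nth SLeaf cs i))
               (xF R - cst (c + delta * (Nchild h cs i)%:R))).
  by apply: eq_bigr => i _; rewrite HMi HG.
have U1 : UGam alpha beta gamma delta (SNode h cs) z =
   \matrix_(i, j < size cs) ((i == j)%:R / Gam SLeaf nleaves cs (Mfn h cs z) i - Cfn h i j).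
  apply/matrixP => i j; rewrite /= !mxE.
  rewrite zE -(HG i) /Cfn.
  have -> : (nat_of_ord i == nat_of_ord j) = (i == j) by [].
  set e := ((i == j)%:R : R). set a := ((h i j)%:R : R).
  have -> : - alpha * a + gamma * e - gamma = - (alpha * a + gamma - gamma * e) by ring.
  by rewrite cstN addrC.
rewrite P1 -U1 in Hgc.
have E := node_mx z wf. rewrite E.
change (nleaves (SNode h cs)) with (sumn (map nleaves cs)).
exact: Hgc.
Qed.

End Node.

Lemma flat_prod (F : comRingType) (cs : seq stree) m (G : seq nat -> F)
   (P : pred (seq nat)) : (forall i x, P (i :: x)) ->
  \prod_(w <- flatten [seq map (cons ip.1) ip.2 | ip <- zip (iota m (size cs)) (map ipaths cs)] | P w) G w
  = \prod_(i < size cs) \prod_(w <- ipaths (nth SLeaf cs i)) G ((m + i)%N :: w).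
Proof.
move=> HP; elim: cs m => [|c cs IH] m /=; first by rewrite big_nil big_ord0.
rewrite big_cat big_ord_recl /= big_map IH addn0.
congr (_ * _).
  by apply: eq_bigl => x; rewrite HP.
by apply: eq_bigr => i _; rewrite addSnnS.
Qed.

Section Fin.
Variables (R : realFieldType) (alpha beta gamma delta : R).
Local Notation FF := {fraction {poly R}}.

Definition term (t : stree) (w : seq nat) (z : FF) : FF :=
  GammaAt alpha beta gamma delta (nleaves (subtreeAt t w)) (treeAdj (subtreeAt t w))
    (z - cst (delta * (Npath t w)%:R)) *
  \det (UGam alpha beta gamma delta (subtreeAt t w) (z - cst (delta * (Npath t w)%:R))).

Lemma term_cons h cs i w z :
  term (SNode h cs) (i :: w) z = term (nth SLeaf cs i) w (z - cst (delta * (Nchild h cs i)%:R)).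
Proof.
rewrite /term /=.
have -> : z - cst (delta * (Nchild h cs i + Npath (nth SLeaf cs i) w)%:R) =
          z - cst (delta * (Nchild h cs i)%:R) - cst (delta * (Npath (nth SLeaf cs i) w)%:R).
  by rewrite natrD mulrDr cstD opprD addrA.
by [].
Qed.

Lemma leafQ (c : R) :
  \det (Mz alpha beta gamma delta 1 (treeAdj SLeaf) (xF R - cst c)) *
  GammaAt alpha beta gamma delta 1 (treeAdj SLeaf) (xF R - cst c) = 1.
Proof.
have := mulmxV (Mz_unit alpha beta gamma delta 1 (treeAdj SLeaf) c).
move/(congr1 (fun A : 'M_1 => A 0 0)); rewrite !mxE big_ord1 /= => H.
rewrite det_mx11 /GammaAt !big_ord1.
exact: H.
Qed.


Definition Pt (t : stree) (z : FF) : FF := \prod_(w <- ipaths t) term t w z.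

Lemma Pt_node h cs z : Pt (SNode h cs) z =
  term (SNode h cs) [::] z *
  \prod_(i < size cs) Pt (nth SLeaf cs i) (z - cst (delta * (Nchild h cs i)%:R)).
Proof.
rewrite /Pt [ipaths (SNode h cs)]/= big_cons.
have H := @flat_prod _ cs 0 (fun w => term (SNode h cs) w z) (fun _ => true) (fun _ _ => erefl).
rewrite H; apply: congr1.
apply: eq_bigr => i _; apply: eq_bigr => w _.
by rewrite add0n term_cons.
Qed.

Lemma QP t : wf_stree t -> forall c : R,
  \det (Mz alpha beta gamma delta (nleaves t) (treeAdj t) (xF R - cst c)) *
  GammaAt alpha beta gamma delta (nleaves t) (treeAdj t) (xF R - cst c) = Pt t (xF R - cst c).
Proof.
elim/stree_ind2: t => [|h cs IH] wf c.
  by rewrite leafQ /Pt big_nil.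
have E : forall i : 'I_(size cs),
  \det (Mz alpha beta gamma delta (nleaves (nth SLeaf cs i)) (treeAdj (nth SLeaf cs i))
               (xF R - cst (c + delta * (Nchild h cs i)%:R)))
      * GammaAt alpha beta gamma delta (nleaves (nth SLeaf cs i)) (treeAdj (nth SLeaf cs i))
               (xF R - cst (c + delta * (Nchild h cs i)%:R)) =
  Pt (nth SLeaf cs i) (xF R - cst c - cst (delta * (Nchild h cs i)%:R)).
  move=> i; rewrite (IH i (ltn_ord i) (wf_child wf (ltn_ord i))).
  rewrite cstD opprD addrA. reflexivity.
Opaque Gam GammaAt Mi Mz UGam.
rewrite (node_det _ _ _ _ _ wf).
rewrite (eq_bigr _ (fun i _ => E i)) Pt_node /term.
rewrite [subtreeAt _ _]/= [Npath _ _]/= mulr0 cst0 subr0.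
set A := \prod_(i < size cs) _.
set B := \det _. set G := GammaAt _ _ _ _ _ _ _.
rewrite mulrC [A * B]mulrC mulrA.
reflexivity.
Qed.

End Fin.

Lemma Phi_Mz (R : realFieldType) (alpha beta gamma delta : R) n adj :
  tof (Phi alpha beta gamma delta n adj) = \det (Mz alpha beta gamma delta n adj (xF R)).
Proof.
have := Mz_char alpha beta gamma delta n adj 0.
rewrite cst0 subr0 => ->.
rewrite det_map_mx /Phi /char_poly /tof.
have -> : (0 : R)%:M = 0 :> 'M_n by apply/matrixP => a b; rewrite !mxE mul0rn.
by rewrite addr0.
Qed.


Unset Implicit Arguments.
Theorem mainTheorem11 (R : realFieldType) (alpha beta gamma delta : R)
  (T : stree) :
  alpha != 0 -> wf_stree T -> (2 <= nleaves T)%N ->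
  tof (Phi alpha beta gamma delta (nleaves T) (treeAdj T)) =
    (\prod_(w <- ipaths T | w != [::])
       (GammaAt alpha beta gamma delta (nleaves (subtreeAt T w)) (treeAdj (subtreeAt T w))
                (xF R - cst (delta * (Npath T w)%:R))
        * \det (UGam alpha beta gamma delta (subtreeAt T w)
                     (xF R - cst (delta * (Npath T w)%:R)))))
    * \det (UGam alpha beta gamma delta T (xF R)).
Proof.
move=> _ wf; case: T wf => [//|h cs] wf _.
rewrite Phi_Mz.
have H := node_det alpha beta gamma delta 0 wf.
rewrite cst0 subr0 in H; rewrite H.
have E2 : forall i : 'I_(size cs),
  \det (Mz alpha beta gamma delta (nleaves (nth SLeaf cs i)) (treeAdj (nth SLeaf cs i))
               (xF R - cst (0 + delta * (Nchild h cs i)%:R)))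
      * GammaAt alpha beta gamma delta (nleaves (nth SLeaf cs i)) (treeAdj (nth SLeaf cs i))
               (xF R - cst (0 + delta * (Nchild h cs i)%:R)) =
  Pt alpha beta gamma delta (nth SLeaf cs i) (xF R - cst (delta * (Nchild h cs i)%:R)).
  move=> i; rewrite (QP alpha beta gamma delta (wf_child wf (ltn_ord i))) add0r.
  reflexivity.
rewrite (eq_bigr _ (fun i _ => E2 i)).
rewrite [ipaths _]/= big_cons [[::] != [::]]/=.
have H2 := @flat_prod _ cs 0 (fun w => term alpha beta gamma delta (SNode h cs) w (xF R))
   (fun w => w != [::]) (fun _ _ => erefl).
rewrite H2.
have P2 : \prod_(i < size cs) \prod_(w <- ipaths (nth SLeaf cs i))
        term alpha beta gamma delta (SNode h cs) ((0 + i)%N :: w) (xF R) =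
  \prod_(i < size cs) Pt alpha beta gamma delta (nth SLeaf cs i)
       (xF R - cst (delta * (Nchild h cs i)%:R)).
  apply: eq_bigr => i _; rewrite /Pt; apply: eq_bigr => w _.
  rewrite add0n term_cons. reflexivity.
apply: (congr1 (fun X => X * \det (UGam alpha beta gamma delta (SNode h cs) (xF R)))).
exact: (esym P2).
Qed.
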